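(* Let $\mathcal{G}$ be the complete quadrilateral, let $R$ be a commutative ring with $2=0$ and let $A=M_R(\mathcal{G},1)$ (a free $R$-module of rank $6$). For each of the $4$ lines $\ell$ of $\mathcal{G}$, let $A^\ell_0$ and $A^\ell_1$ be the eigenspaces of $\operatorname{ad}_\ell$ for the eigenvalues $0$ and $1$. Then for each line $\ell$, $A=A^\ell_0\oplus A^\ell_1$ and \[ A^\ell_0A^\ell_0\subseteq A^\ell_0,\quad A^\ell_0A^\ell_1\subseteq A^\ell_1,\quad A^\ell_1A^\ell_1=0 , \] i.e. $A$ is a decomposition algebra with fusion law $0*0=\{0\}$, $0*1=1*0=\{1\}$, $1*1=\emptyset$. Moreover, the subspaces $A^\ell_1$ coincide for all $4$ choices of $\ell$.
   Context: The complete quadrilateral is the partial linear space with $6$ points $a,b,c,x,y,z$ and $4$ lines $\{a,b,c\}$, $\{a,y,z\}$, $\{b,x,z\}$, $\{c,x,y\}$ (the Fischer space of $\mathrm{Sym}(4)$ with its transpositions). For distinct collinear points $p,q$ (written $p\sim q$), $p\wedge q$ denotes the third point of their line. The nilpotent Matsuo algebra $A=M_R(\mathcal{G},1)$ is the free $R$-module with basis the points and commutative bilinear product $p\cdot q=0$ if $p=q$ or $p\not\sim q$, and $p\cdot q=p+q+p\wedge q$ if $p\sim q$. For a line $\ell$, we also write $\ell$ for the sum of its three points in $A$, and $\operatorname{ad}_\ell(v)=\ell v$; the eigenspace for $\lambda$ is $\{v:\ell v=\lambda v\}$. *)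

(* Defs.v *)
From HB Require Import structures.
From mathcomp Require Import all_boot all_order all_algebra.
Set Implicit Arguments. Unset Strict Implicit. Unset Printing Implicit Defensive.
Import GRing.Theory.
Local Open Scope ring_scope.

Definition pa : 'I_6 := @Ordinal 6 0 isT.
Definition pb : 'I_6 := @Ordinal 6 1 isT.
Definition pc : 'I_6 := @Ordinal 6 2 isT.
Definition px : 'I_6 := @Ordinal 6 3 isT.
Definition py : 'I_6 := @Ordinal 6 4 isT.
Definition pz : 'I_6 := @Ordinal 6 5 isT.

Definition cq_line (l : 'I_4) : {set 'I_6} :=
  match val l with
  | 0 => [set pa; pb; pc]
  | 1 => [set pa; py; pz]
  | 2 => [set pb; px; pz]
  | _ => [set pc; px; py]
  end.

Definition cq_coll (p q : 'I_6) : bool :=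
  (p != q) && [exists l, (p \in cq_line l) && (q \in cq_line l)].

(* p /\ q : third point on the line through p and q (only meaningful if p ~ q) *)
Definition cq_wedge (p q : 'I_6) : 'I_6 :=
  odflt p [pick r | [&& r != p, r != q &
     [exists l, [&& p \in cq_line l, q \in cq_line l & r \in cq_line l]]]].

(* The nilpotent Matsuo algebra M_R(G,1): free R-module on the points. *)
Notation matsuo R := {ffun 'I_6 -> R^o}.

Definition mbasis (R : comPzRingType) (p : 'I_6) : matsuo R :=
  [ffun r => (r == p)%:R].

Definition mprod_basis (R : comPzRingType) (p q : 'I_6) : matsuo R :=
  if cq_coll p q then mbasis R p + mbasis R q + mbasis R (cq_wedge p q) else 0.

Definition mmul (R : comPzRingType) (u v : matsuo R) : matsuo R :=
  \sum_(p : 'I_6) \sum_(q : 'I_6) (u p * v q) *: mprod_basis R p q.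

Definition line_elt (R : comPzRingType) (l : 'I_4) : matsuo R :=
  \sum_(p in cq_line l) mbasis R p.

Definition eigsp (R : comPzRingType) (l : 'I_4) (lam : R) (v : matsuo R) : Prop :=
  mmul (line_elt R l) v = lam *: v.

(* Main.v *)
Require Import Defs.
From mathcomp Require Import all_boot all_order all_algebra ring.
Import GRing.Theory.
Local Open Scope ring_scope.
Set Implicit Arguments. Unset Strict Implicit.

Definition wedo (p q : 'I_6) : 'I_6 :=
  match val p, val q with
  | 0, 1 => pc
  | 0, 2 => pb
  | 0, 4 => pz
  | 0, 5 => py
  | 1, 0 => pc
  | 1, 2 => pa
  | 1, 3 => pz
  | 1, 5 => px
  | 2, 0 => pb
  | 2, 1 => pa
  | 2, 3 => py
  | 2, 4 => px
  | 3, 1 => pz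
  | 3, 2 => py
  | 3, 4 => pc
  | 3, 5 => pb
  | 4, 0 => pz
  | 4, 2 => px
  | 4, 3 => pc
  | 4, 5 => pa
  | 5, 0 => py
  | 5, 1 => px
  | 5, 3 => pb
  | 5, 4 => pa
  | _, _ => pa
  end.
Definition oppo (p : nat) : nat := match p with 0 => 3 | 1 => 4 | 2 => 5 | 3 => 0 | 4 => 1 | _ => 2 end.
Definition collt (p q : 'I_6) : bool := (val p != val q) && (oppo (val p) != val q).

Lemma in_set3 (T : finType) (a b c p : T) : (p \in [set a; b; c]) = [|| p == a, p == b | p == c].
Proof. by rewrite !inE -orbA. Qed.

Lemma exists_I4 (P : pred 'I_4) :
  [exists l, P l] = [|| P (@Ordinal 4 0 isT), P (@Ordinal 4 1 isT), P (@Ordinal 4 2 isT) | P (@Ordinal 4 3 isT)].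
Proof.
apply/existsP/idP => [[l Pl]|].
  case: l Pl => [[|[|[|[|m]]]] Hm] Pl //.
  - by rewrite (_ : @Ordinal 4 0 isT = Ordinal Hm) ?Pl //; apply: val_inj.
  - by rewrite (_ : @Ordinal 4 1 isT = Ordinal Hm) ?Pl ?orbT //; apply: val_inj.
  - by rewrite (_ : @Ordinal 4 2 isT = Ordinal Hm) ?Pl ?orbT //; apply: val_inj.
  - by rewrite (_ : @Ordinal 4 3 isT = Ordinal Hm) ?Pl ?orbT //; apply: val_inj.
by case/or4P => H; eexists; exact: H.
Qed.

Lemma collE (p q : 'I_6) : cq_coll p q = collt p q.
Proof.
rewrite /cq_coll exists_I4 /cq_line /=.
by case: p => [[|[|[|[|[|[|?]]]]]] Hp]; case: q => [[|[|[|[|[|[|?]]]]]] Hq]; rewrite ?in_set3.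
Qed.

Lemma pick_uniq (T : finType) (P : pred T) r0 :
  (forall r, P r = (r == r0)) -> [pick r | P r] = Some r0.
Proof.
move=> H; case: pickP => [r Pr|H0]; first by move: Pr; rewrite H => /eqP ->.
by move: (H0 r0); rewrite H eqxx.
Qed.

Lemma wedgeE (p q : 'I_6) : collt p q -> cq_wedge p q = wedo p q.
Proof.
move=> C; rewrite /cq_wedge (@pick_uniq _ _ (wedo p q)) // => r.
rewrite exists_I4 /cq_line /=.
by case: p C => [[|[|[|[|[|[|?]]]]]] Hp]; case: q => [[|[|[|[|[|[|?]]]]]] Hq] //= _;
  case: r => [[|[|[|[|[|[|?]]]]]] Hr]; rewrite ?in_set3.
Qed.

Definition vec (R : comPzRingType) (a b c x y z : R) : matsuo R :=
  [ffun r : 'I_6 => match val r with 0 => a | 1 => b | 2 => c | 3 => x | 4 => y | _ => z end].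

Lemma mprod_basisE (R : comPzRingType) (p q r : 'I_6) :
  mprod_basis R p q r = if collt p q && [|| r == p, r == q | r == wedo p q] then 1 else 0.
Proof.
rewrite /mprod_basis collE; case C: (collt p q); last by rewrite ffunE.
rewrite (wedgeE C) !ffunE /=.
by case: p C => [[|[|[|[|[|[|?]]]]]] Hp]; case: q => [[|[|[|[|[|[|?]]]]]] Hq] //= _;
  case: r => [[|[|[|[|[|[|?]]]]]] Hr]; rewrite /= ?mulr0n ?mulr1n ?addr0 ?add0r.
Qed.

Lemma sc1 (R : comPzRingType) (k : R) : k *: (1 : R^o) = k.
Proof. exact: mulr1. Qed.

Lemma mmul_vec (R : comPzRingType) (a b c x y z a' b' c' x' y' z' : R) :
  mmul (vec a b c x y z) (vec a' b' c' x' y' z') =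
  vec (a * b' + a * c' + a * y' + a * z' + b * a' + b * c' + c * a' + c * b' + y * a' + y * z' + z * a' + z * y')
      (a * b' + a * c' + b * a' + b * c' + b * x' + b * z' + c * a' + c * b' + x * b' + x * z' + z * b' + z * x')
      (a * b' + a * c' + b * a' + b * c' + c * a' + c * b' + c * x' + c * y' + x * c' + x * y' + y * c' + y * x')
      (b * x' + b * z' + c * x' + c * y' + x * b' + x * c' + x * y' + x * z' + y * c' + y * x' + z * b' + z * x')
      (a * y' + a * z' + c * x' + c * y' + x * c' + x * y' + y * a' + y * c' + y * x' + y * z' + z * a' + z * y')
      (a * y' + a * z' + b * x' + b * z' + x * b' + x * z' + y * a' + y * z' + z * a' + z * b' + z * x' + z * y').
Proof.
apply/ffunP => r; rewrite /mmul sum_ffunE; under eq_bigr do rewrite sum_ffunE.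
rewrite !big_ord_recl !big_ord0 !ffunE !mprod_basisE.
by case: r => [[|[|[|[|[|[|?]]]]]] Hr]; rewrite /= ?scaler0 ?sc1 ?addr0 ?add0r; [ring..|by []].
Qed.

Lemma vecE (R : comPzRingType) (v : matsuo R) : v = vec (v pa) (v pb) (v pc) (v px) (v py) (v pz).
Proof.
apply/ffunP => r; rewrite ffunE.
case: r => [[|[|[|[|[|[|m]]]]]] Hr] //=; congr (v _); exact: val_inj.
Qed.

Lemma vec_inj (R : comPzRingType) (a b c x y z a' b' c' x' y' z' : R) :
  vec a b c x y z = vec a' b' c' x' y' z' ->
  [/\ a = a', b = b', c = c', x = x' & (y = y' /\ z = z')].
Proof.
move/ffunP => H.
by move: (H pa) (H pb) (H pc) (H px) (H py) (H pz); rewrite !ffunE /= => -> -> -> -> -> ->; do !split.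
Qed.

Lemma vec_eq6 (R : comPzRingType) (a b c x y z a' b' c' x' y' z' : R) :
  a = a' -> b = b' -> c = c' -> x = x' -> y = y' -> z = z' ->
  vec a b c x y z = vec a' b' c' x' y' z'.
Proof. by move=> -> -> -> -> -> ->. Qed.

Lemma scale_vec (R : comPzRingType) (k a b c x y z : R) :
  k *: vec a b c x y z = vec (k * a) (k * b) (k * c) (k * x) (k * y) (k * z).
Proof. by apply/ffunP => r; rewrite !ffunE; case: (val r) => [|[|[|[|[|?]]]]]. Qed.

Lemma add_vec (R : comPzRingType) (a b c x y z a' b' c' x' y' z' : R) :
  vec a b c x y z + vec a' b' c' x' y' z' = vec (a + a') (b + b') (c + c') (x + x') (y + y') (z + z').
Proof. by apply/ffunP => r; rewrite !ffunE; case: (val r) => [|[|[|[|[|?]]]]]. Qed.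

Lemma zero_vec (R : comPzRingType) : (0 : matsuo R) = vec 0 0 0 0 0 0.
Proof. by apply/ffunP => r; rewrite !ffunE; case: (val r) => [|[|[|[|[|?]]]]]. Qed.

Lemma by2 (R : comPzRingType) (h2 : (2%:R : R) = 0) (q x y : R) : x - y = 2%:R * q -> x = y.
Proof. by rewrite h2 mul0r => /eqP; rewrite subr_eq0 => /eqP. Qed.

Lemma addh (R : comPzRingType) (P Q x y : R) : P = Q -> x - (P - Q) = y -> x = y.
Proof. by move=> ->; rewrite subrr subr0. Qed.

Lemma line_vec0 (R : comPzRingType) (l : 'I_4) (hl : val l = 0%N) : line_elt R l = vec 1 1 1 0 0 0.
Proof.
rewrite /line_elt /cq_line hl; apply/ffunP => r.
rewrite sum_ffunE big_mkcond !big_ord_recl big_ord0 !in_set3 !ffunE.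
by case: r => [[|[|[|[|[|[|?]]]]]] Hr] //=; rewrite ?mulr0n ?mulr1n ?addr0 ?add0r.
Qed.

Lemma eig0_0 (R : comPzRingType) (h2 : (2%:R : R) = 0) (l : 'I_4) (hl : val l = 0%N) (a b c x y z : R) :
  eigsp l 0 (vec a b c x y z) <-> x = z /\ y = z.
Proof.
rewrite /eigsp (line_vec0 R hl) mmul_vec scale_vec; split.
  move/vec_inj => [H0 H1 H2 H3 [H4 H5]]; split.
  - apply: (addh H1); apply: (by2 h2 (q := (- a - b - c - z))); ring.
  - apply: (addh H0); apply: (by2 h2 (q := (- a - b - c - z))); ring.
case=> -> ->; apply: vec_eq6.
- apply: (by2 h2 (q := (a + b + c + z))); ring.
- apply: (by2 h2 (q := (a + b + c + z))); ring.
- apply: (by2 h2 (q := (a + b + c + z))); ring.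
- apply: (by2 h2 (q := (2%:R * z))); ring.
- apply: (by2 h2 (q := (2%:R * z))); ring.
- apply: (by2 h2 (q := (2%:R * z))); ring.
Qed.

Lemma eig1_0 (R : comPzRingType) (h2 : (2%:R : R) = 0) (l : 'I_4) (hl : val l = 0%N) (a b c x y z : R) :
  eigsp l 1 (vec a b c x y z) <-> [/\ x = a, y = b, z = c & a = b + c].
Proof.
rewrite /eigsp (line_vec0 R hl) mmul_vec scale_vec; split.
  move/vec_inj => [H0 H1 H2 H3 [H4 H5]]; split.
  - apply: (addh H0); apply: (addh H3); apply: (by2 h2 (q := (- a - b - c - y - z))); ring.
  - apply: (addh H1); apply: (addh H3); apply: (by2 h2 (q := (- a - b - c - x - z))); ring.
  - apply: (addh H2); apply: (addh H3); apply: (by2 h2 (q := (- a - b - c - x - y))); ring.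
  - apply: (addh H0); apply: (addh H1); apply: (addh H2); apply: (by2 h2 (q := (- 2%:R * a - 3%:R * b - 3%:R * c - x - y - z))); ring.
case=> -> -> -> ->; apply: vec_eq6.
- apply: (by2 h2 (q := (2%:R * b + 2%:R * c))); ring.
- apply: (by2 h2 (q := (2%:R * b + 3%:R * c))); ring.
- apply: (by2 h2 (q := (3%:R * b + 2%:R * c))); ring.
- apply: (by2 h2 (q := (b + c))); ring.
- apply: (by2 h2 (q := (b + c))); ring.
- apply: (by2 h2 (q := (b + c))); ring.
Qed.

Lemma dec_0 (R : comPzRingType) (h2 : (2%:R : R) = 0) (l : 'I_4) (hl : val l = 0%N) (a b c x y z : R) :
  exists v0 v1 : matsuo R, [/\ eigsp l 0 v0, eigsp l 1 v1 & vec a b c x y z = v0 + v1].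
Proof.
exists (vec (a - 2%:R * x - y - z) (b - x - z) (c - x - y) (- x - y - z) (- x + y - z) (- x - y + z)), (vec (2%:R * x + y + z) (x + z) (x + y) (2%:R * x + y + z) (x + z) (x + y)); split.
- apply/(eig0_0 h2 hl); split.
  + apply: (by2 h2 (q := (- z))); ring.
  + apply: (by2 h2 (q := (y - z))); ring.
- by apply/(eig1_0 h2 hl); split; ring.
- by rewrite add_vec; apply: vec_eq6; ring.
Qed.

Lemma uniq_0 (R : comPzRingType) (h2 : (2%:R : R) = 0) (l : 'I_4) (hl : val l = 0%N) (a b c x y z : R) :
  eigsp l 0 (vec a b c x y z) -> eigsp l 1 (vec a b c x y z) -> vec a b c x y z = 0.
Proof.
move=> /(eig0_0 h2 hl) [H0 H1] /(eig1_0 h2 hl) [H2 H3 H4 H5]; rewrite zero_vec; apply: vec_eq6.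
- apply: (addh H1); apply: (addh H3); apply: (addh H4); apply: (addh H5); apply: (by2 h2 (q := (b + c - y))); ring.
- apply: (addh H0); apply: (addh H2); apply: (addh H4); apply: (addh H5); apply: (by2 h2 (q := (b + c - x))); ring.
- apply: (addh H0); apply: (addh H1); apply: (addh H2); apply: (addh H3); apply: (addh H5); apply: (by2 h2 (q := (b + c - x - y + z))); ring.
- apply: (addh H1); apply: (addh H2); apply: (addh H3); apply: (addh H4); apply: (addh H5); apply: (by2 h2 (q := (b + c - y))); ring.
- apply: (addh H0); apply: (addh H2); apply: (addh H3); apply: (addh H4); apply: (addh H5); apply: (by2 h2 (q := (b + c - x))); ring.
- apply: (addh H0); apply: (addh H1); apply: (addh H2); apply: (addh H3); apply: (addh H4); apply: (addh H5); apply: (by2 h2 (q := (b + c - x - y + z))); ring.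
Qed.

Lemma fus00_0 (R : comPzRingType) (h2 : (2%:R : R) = 0) (l : 'I_4) (hl : val l = 0%N) (a b c x y z a' b' c' x' y' z' : R) :
  eigsp l 0 (vec a b c x y z) -> eigsp l 0 (vec a' b' c' x' y' z') -> eigsp l 0 (mmul (vec a b c x y z) (vec a' b' c' x' y' z')).
Proof.
move=> /(eig0_0 h2 hl) [-> ->] /(eig0_0 h2 hl) [-> ->]; rewrite mmul_vec.
apply/(eig0_0 h2 hl); split.
- apply: (by2 h2 (q := (- a * z' - a' * z + c * z' + c' * z))); ring.
- apply: (by2 h2 (q := (- b * z' - b' * z + c * z' + c' * z))); ring.
Qed.

Lemma fus01_0 (R : comPzRingType) (h2 : (2%:R : R) = 0) (l : 'I_4) (hl : val l = 0%N) (a b c x y z a' b' c' x' y' z' : R) :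
  eigsp l 0 (vec a b c x y z) -> eigsp l 1 (vec a' b' c' x' y' z') -> eigsp l 1 (mmul (vec a b c x y z) (vec a' b' c' x' y' z')).
Proof.
move=> /(eig0_0 h2 hl) [-> ->] /(eig1_0 h2 hl) [-> -> -> ->]; rewrite mmul_vec.
apply/(eig1_0 h2 hl); split.
- apply: (by2 h2 (q := (- a * b' - a * c' + b' * z + c' * z))); ring.
- apply: (by2 h2 (q := (- b * b' - 2%:R * b * c' + b' * z + 2%:R * c' * z))); ring.
- apply: (by2 h2 (q := (- 2%:R * b' * c + 2%:R * b' * z - c * c' + c' * z))); ring.
- apply: (by2 h2 (q := (- b * b' - 2%:R * b * c' - 2%:R * b' * c - b' * z - c * c' - c' * z))); ring.
Qed.

Lemma fus10_0 (R : comPzRingType) (h2 : (2%:R : R) = 0) (l : 'I_4) (hl : val l = 0%N) (a b c x y z a' b' c' x' y' z' : R) :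
  eigsp l 1 (vec a b c x y z) -> eigsp l 0 (vec a' b' c' x' y' z') -> eigsp l 1 (mmul (vec a b c x y z) (vec a' b' c' x' y' z')).
Proof.
move=> /(eig1_0 h2 hl) [-> -> -> ->] /(eig0_0 h2 hl) [-> ->]; rewrite mmul_vec.
apply/(eig1_0 h2 hl); split.
- apply: (by2 h2 (q := (- a' * b - a' * c + b * z' + c * z'))); ring.
- apply: (by2 h2 (q := (- b * b' + b * z' - 2%:R * b' * c + 2%:R * c * z'))); ring.
- apply: (by2 h2 (q := (- 2%:R * b * c' + 2%:R * b * z' - c * c' + c * z'))); ring.
- apply: (by2 h2 (q := (- b * b' - 2%:R * b * c' - b * z' - 2%:R * b' * c - c * c' - c * z'))); ring.
Qed.

Lemma fus11_0 (R : comPzRingType) (h2 : (2%:R : R) = 0) (l : 'I_4) (hl : val l = 0%N) (a b c x y z a' b' c' x' y' z' : R) :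
  eigsp l 1 (vec a b c x y z) -> eigsp l 1 (vec a' b' c' x' y' z') -> mmul (vec a b c x y z) (vec a' b' c' x' y' z') = 0.
Proof.
move=> /(eig1_0 h2 hl) [-> -> -> ->] /(eig1_0 h2 hl) [-> -> -> ->]; rewrite mmul_vec.
rewrite zero_vec; apply: vec_eq6.
- apply: (by2 h2 (q := (2%:R * b * b' + 3%:R * b * c' + 3%:R * b' * c + 2%:R * c * c'))); ring.
- apply: (by2 h2 (q := (2%:R * b * b' + 3%:R * b * c' + 3%:R * b' * c + 2%:R * c * c'))); ring.
- apply: (by2 h2 (q := (2%:R * b * b' + 3%:R * b * c' + 3%:R * b' * c + 2%:R * c * c'))); ring.
- apply: (by2 h2 (q := (2%:R * b * b' + 3%:R * b * c' + 3%:R * b' * c + 2%:R * c * c'))); ring.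
- apply: (by2 h2 (q := (2%:R * b * b' + 3%:R * b * c' + 3%:R * b' * c + 2%:R * c * c'))); ring.
- apply: (by2 h2 (q := (2%:R * b * b' + 3%:R * b * c' + 3%:R * b' * c + 2%:R * c * c'))); ring.
Qed.

Lemma props_0 (R : comPzRingType) (h2 : (2%:R : R) = 0) (l : 'I_4) (hl : val l = 0%N) :
     (forall v : matsuo R, exists v0 v1 : matsuo R,
        [/\ eigsp l 0 v0, eigsp l 1 v1 & v = v0 + v1]) /\
     (forall v : matsuo R, eigsp l 0 v -> eigsp l 1 v -> v = 0) /\
     (forall u v : matsuo R, eigsp l 0 u -> eigsp l 0 v -> eigsp l 0 (mmul u v)) /\
     (forall u v : matsuo R, eigsp l 0 u -> eigsp l 1 v -> eigsp l 1 (mmul u v)) /\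
     (forall u v : matsuo R, eigsp l 1 u -> eigsp l 0 v -> eigsp l 1 (mmul u v)) /\
     (forall u v : matsuo R, eigsp l 1 u -> eigsp l 1 v -> mmul u v = 0).
Proof.
split; first by move=> v; rewrite (vecE v); apply: (dec_0 h2 hl).
split; first by move=> v; rewrite (vecE v); apply: (uniq_0 h2 hl).
split; first by move=> u v; rewrite (vecE u) (vecE v); apply: (fus00_0 h2 hl).
split; first by move=> u v; rewrite (vecE u) (vecE v); apply: (fus01_0 h2 hl).
split; first by move=> u v; rewrite (vecE u) (vecE v); apply: (fus10_0 h2 hl).
by move=> u v; rewrite (vecE u) (vecE v); apply: (fus11_0 h2 hl).
Qed.

Lemma line_vec1 (R : comPzRingType) (l : 'I_4) (hl : val l = 1%N) : line_elt R l = vec 1 0 0 0 1 1.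
Proof.
rewrite /line_elt /cq_line hl; apply/ffunP => r.
rewrite sum_ffunE big_mkcond !big_ord_recl big_ord0 !in_set3 !ffunE.
by case: r => [[|[|[|[|[|[|?]]]]]] Hr] //=; rewrite ?mulr0n ?mulr1n ?addr0 ?add0r.
Qed.

Lemma eig0_1 (R : comPzRingType) (h2 : (2%:R : R) = 0) (l : 'I_4) (hl : val l = 1%N) (a b c x y z : R) :
  eigsp l 0 (vec a b c x y z) <-> b = x /\ c = x.
Proof.
rewrite /eigsp (line_vec1 R hl) mmul_vec scale_vec; split.
  move/vec_inj => [H0 H1 H2 H3 [H4 H5]]; split.
  - apply: (addh H0); apply: (addh H1); apply: (by2 h2 (q := (- a - b - c - x - y - z))); ring.
  - apply: (addh H1); apply: (by2 h2 (q := (- b - x))); ring.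
case=> -> ->; apply: vec_eq6.
- apply: (by2 h2 (q := (a + x + y + z))); ring.
- apply: (by2 h2 (q := (2%:R * x))); ring.
- apply: (by2 h2 (q := (2%:R * x))); ring.
- apply: (by2 h2 (q := (2%:R * x))); ring.
- apply: (by2 h2 (q := (a + x + y + z))); ring.
- apply: (by2 h2 (q := (a + x + y + z))); ring.
Qed.

Lemma eig1_1 (R : comPzRingType) (h2 : (2%:R : R) = 0) (l : 'I_4) (hl : val l = 1%N) (a b c x y z : R) :
  eigsp l 1 (vec a b c x y z) <-> [/\ x = a, y = b, z = c & a = b + c].
Proof.
rewrite /eigsp (line_vec1 R hl) mmul_vec scale_vec; split.
  move/vec_inj => [H0 H1 H2 H3 [H4 H5]]; split.
  - apply: (addh H0); apply: (addh H1); apply: (by2 h2 (q := (- a - b - c - y - z))); ring.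
  - apply: (addh H1); apply: (addh H4); apply: (by2 h2 (q := (- a - b - c - x - z))); ring.
  - apply: (addh H1); apply: (addh H5); apply: (by2 h2 (q := (- a - b - c - x - y))); ring.
  - apply: (addh H0); apply: (by2 h2 (q := (- b - c - y - z))); ring.
case=> -> -> -> ->; apply: vec_eq6.
- apply: (by2 h2 (q := (2%:R * b + 2%:R * c))); ring.
- apply: (by2 h2 (q := (b + c))); ring.
- apply: (by2 h2 (q := (b + c))); ring.
- apply: (by2 h2 (q := (b + c))); ring.
- apply: (by2 h2 (q := (2%:R * b + 3%:R * c))); ring.
- apply: (by2 h2 (q := (3%:R * b + 2%:R * c))); ring.
Qed.

Lemma dec_1 (R : comPzRingType) (h2 : (2%:R : R) = 0) (l : 'I_4) (hl : val l = 1%N) (a b c x y z : R) :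
  exists v0 v1 : matsuo R, [/\ eigsp l 0 v0, eigsp l 1 v1 & vec a b c x y z = v0 + v1].
Proof.
exists (vec (a - b - c - 2%:R * x) (b - c - x) (- b + c - x) (- b - c - x) (- c - x + y) (- b - x + z)), (vec (b + c + 2%:R * x) (c + x) (b + x) (b + c + 2%:R * x) (c + x) (b + x)); split.
- apply/(eig0_1 h2 hl); split.
  + apply: (by2 h2 (q := (b))); ring.
  + apply: (by2 h2 (q := (c))); ring.
- by apply/(eig1_1 h2 hl); split; ring.
- by rewrite add_vec; apply: vec_eq6; ring.
Qed.

Lemma uniq_1 (R : comPzRingType) (h2 : (2%:R : R) = 0) (l : 'I_4) (hl : val l = 1%N) (a b c x y z : R) :
  eigsp l 0 (vec a b c x y z) -> eigsp l 1 (vec a b c x y z) -> vec a b c x y z = 0.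
Proof.
move=> /(eig0_1 h2 hl) [H0 H1] /(eig1_1 h2 hl) [H2 H3 H4 H5]; rewrite zero_vec; apply: vec_eq6.
- apply: (addh H0); apply: (addh H1); apply: (addh H5); apply: (by2 h2 (q := (x))); ring.
- apply: (addh H1); apply: (addh H2); apply: (addh H5); apply: (by2 h2 (q := (b))); ring.
- apply: (addh H0); apply: (addh H2); apply: (addh H5); apply: (by2 h2 (q := (c))); ring.
- apply: (addh H0); apply: (addh H1); apply: (addh H2); apply: (addh H5); apply: (by2 h2 (q := (x))); ring.
- apply: (addh H1); apply: (addh H2); apply: (addh H3); apply: (addh H5); apply: (by2 h2 (q := (b))); ring.
- apply: (addh H0); apply: (addh H2); apply: (addh H4); apply: (addh H5); apply: (by2 h2 (q := (c))); ring.
Qed.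

Lemma fus00_1 (R : comPzRingType) (h2 : (2%:R : R) = 0) (l : 'I_4) (hl : val l = 1%N) (a b c x y z a' b' c' x' y' z' : R) :
  eigsp l 0 (vec a b c x y z) -> eigsp l 0 (vec a' b' c' x' y' z') -> eigsp l 0 (mmul (vec a b c x y z) (vec a' b' c' x' y' z')).
Proof.
move=> /(eig0_1 h2 hl) [-> ->] /(eig0_1 h2 hl) [-> ->]; rewrite mmul_vec.
apply/(eig0_1 h2 hl); split.
- apply: (by2 h2 (q := (a * x' + a' * x - x * y' - x' * y))); ring.
- apply: (by2 h2 (q := (a * x' + a' * x - x * z' - x' * z))); ring.
Qed.

Lemma fus01_1 (R : comPzRingType) (h2 : (2%:R : R) = 0) (l : 'I_4) (hl : val l = 1%N) (a b c x y z a' b' c' x' y' z' : R) :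
  eigsp l 0 (vec a b c x y z) -> eigsp l 1 (vec a' b' c' x' y' z') -> eigsp l 1 (mmul (vec a b c x y z) (vec a' b' c' x' y' z')).
Proof.
move=> /(eig0_1 h2 hl) [-> ->] /(eig1_1 h2 hl) [-> -> -> ->]; rewrite mmul_vec.
apply/(eig1_1 h2 hl); split.
- apply: (by2 h2 (q := (- a * b' - a * c' + b' * x + c' * x))); ring.
- apply: (by2 h2 (q := (- b' * x + b' * y - 2%:R * c' * x + 2%:R * c' * y))); ring.
- apply: (by2 h2 (q := (- 2%:R * b' * x + 2%:R * b' * z - c' * x + c' * z))); ring.
- apply: (by2 h2 (q := (- 4%:R * b' * x - 4%:R * c' * x))); ring.
Qed.

Lemma fus10_1 (R : comPzRingType) (h2 : (2%:R : R) = 0) (l : 'I_4) (hl : val l = 1%N) (a b c x y z a' b' c' x' y' z' : R) :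
  eigsp l 1 (vec a b c x y z) -> eigsp l 0 (vec a' b' c' x' y' z') -> eigsp l 1 (mmul (vec a b c x y z) (vec a' b' c' x' y' z')).
Proof.
move=> /(eig1_1 h2 hl) [-> -> -> ->] /(eig0_1 h2 hl) [-> ->]; rewrite mmul_vec.
apply/(eig1_1 h2 hl); split.
- apply: (by2 h2 (q := (- a' * b - a' * c + b * x' + c * x'))); ring.
- apply: (by2 h2 (q := (- b * x' + b * y' - 2%:R * c * x' + 2%:R * c * y'))); ring.
- apply: (by2 h2 (q := (- 2%:R * b * x' + 2%:R * b * z' - c * x' + c * z'))); ring.
- apply: (by2 h2 (q := (- 4%:R * b * x' - 4%:R * c * x'))); ring.
Qed.

Lemma fus11_1 (R : comPzRingType) (h2 : (2%:R : R) = 0) (l : 'I_4) (hl : val l = 1%N) (a b c x y z a' b' c' x' y' z' : R) :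
  eigsp l 1 (vec a b c x y z) -> eigsp l 1 (vec a' b' c' x' y' z') -> mmul (vec a b c x y z) (vec a' b' c' x' y' z') = 0.
Proof.
move=> /(eig1_1 h2 hl) [-> -> -> ->] /(eig1_1 h2 hl) [-> -> -> ->]; rewrite mmul_vec.
rewrite zero_vec; apply: vec_eq6.
- apply: (by2 h2 (q := (2%:R * b * b' + 3%:R * b * c' + 3%:R * b' * c + 2%:R * c * c'))); ring.
- apply: (by2 h2 (q := (2%:R * b * b' + 3%:R * b * c' + 3%:R * b' * c + 2%:R * c * c'))); ring.
- apply: (by2 h2 (q := (2%:R * b * b' + 3%:R * b * c' + 3%:R * b' * c + 2%:R * c * c'))); ring.
- apply: (by2 h2 (q := (2%:R * b * b' + 3%:R * b * c' + 3%:R * b' * c + 2%:R * c * c'))); ring.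
- apply: (by2 h2 (q := (2%:R * b * b' + 3%:R * b * c' + 3%:R * b' * c + 2%:R * c * c'))); ring.
- apply: (by2 h2 (q := (2%:R * b * b' + 3%:R * b * c' + 3%:R * b' * c + 2%:R * c * c'))); ring.
Qed.

Lemma props_1 (R : comPzRingType) (h2 : (2%:R : R) = 0) (l : 'I_4) (hl : val l = 1%N) :
     (forall v : matsuo R, exists v0 v1 : matsuo R,
        [/\ eigsp l 0 v0, eigsp l 1 v1 & v = v0 + v1]) /\
     (forall v : matsuo R, eigsp l 0 v -> eigsp l 1 v -> v = 0) /\
     (forall u v : matsuo R, eigsp l 0 u -> eigsp l 0 v -> eigsp l 0 (mmul u v)) /\
     (forall u v : matsuo R, eigsp l 0 u -> eigsp l 1 v -> eigsp l 1 (mmul u v)) /\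
     (forall u v : matsuo R, eigsp l 1 u -> eigsp l 0 v -> eigsp l 1 (mmul u v)) /\
     (forall u v : matsuo R, eigsp l 1 u -> eigsp l 1 v -> mmul u v = 0).
Proof.
split; first by move=> v; rewrite (vecE v); apply: (dec_1 h2 hl).
split; first by move=> v; rewrite (vecE v); apply: (uniq_1 h2 hl).
split; first by move=> u v; rewrite (vecE u) (vecE v); apply: (fus00_1 h2 hl).
split; first by move=> u v; rewrite (vecE u) (vecE v); apply: (fus01_1 h2 hl).
split; first by move=> u v; rewrite (vecE u) (vecE v); apply: (fus10_1 h2 hl).
by move=> u v; rewrite (vecE u) (vecE v); apply: (fus11_1 h2 hl).
Qed.

Lemma line_vec2 (R : comPzRingType) (l : 'I_4) (hl : val l = 2%N) : line_elt R l = vec 0 1 0 1 0 1.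
Proof.
rewrite /line_elt /cq_line hl; apply/ffunP => r.
rewrite sum_ffunE big_mkcond !big_ord_recl big_ord0 !in_set3 !ffunE.
by case: r => [[|[|[|[|[|[|?]]]]]] Hr] //=; rewrite ?mulr0n ?mulr1n ?addr0 ?add0r.
Qed.

Lemma eig0_2 (R : comPzRingType) (h2 : (2%:R : R) = 0) (l : 'I_4) (hl : val l = 2%N) (a b c x y z : R) :
  eigsp l 0 (vec a b c x y z) <-> a = y /\ c = y.
Proof.
rewrite /eigsp (line_vec2 R hl) mmul_vec scale_vec; split.
  move/vec_inj => [H0 H1 H2 H3 [H4 H5]]; split.
  - apply: (addh H0); apply: (addh H1); apply: (by2 h2 (q := (- a - b - c - x - y - z))); ring.
  - apply: (addh H0); apply: (by2 h2 (q := (- a - y))); ring.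
case=> -> ->; apply: vec_eq6.
- apply: (by2 h2 (q := (2%:R * y))); ring.
- apply: (by2 h2 (q := (b + x + y + z))); ring.
- apply: (by2 h2 (q := (2%:R * y))); ring.
- apply: (by2 h2 (q := (b + x + y + z))); ring.
- apply: (by2 h2 (q := (2%:R * y))); ring.
- apply: (by2 h2 (q := (b + x + y + z))); ring.
Qed.

Lemma eig1_2 (R : comPzRingType) (h2 : (2%:R : R) = 0) (l : 'I_4) (hl : val l = 2%N) (a b c x y z : R) :
  eigsp l 1 (vec a b c x y z) <-> [/\ x = a, y = b, z = c & a = b + c].
Proof.
rewrite /eigsp (line_vec2 R hl) mmul_vec scale_vec; split.
  move/vec_inj => [H0 H1 H2 H3 [H4 H5]]; split.
  - apply: (addh H0); apply: (addh H3); apply: (by2 h2 (q := (- a - b - c - y - z))); ring.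
  - apply: (addh H0); apply: (addh H1); apply: (by2 h2 (q := (- a - b - c - x - z))); ring.
  - apply: (addh H0); apply: (addh H5); apply: (by2 h2 (q := (- a - b - c - x - y))); ring.
  - apply: (addh H1); apply: (by2 h2 (q := (- b - c - x - z))); ring.
case=> -> -> -> ->; apply: vec_eq6.
- apply: (by2 h2 (q := (b + c))); ring.
- apply: (by2 h2 (q := (2%:R * b + 3%:R * c))); ring.
- apply: (by2 h2 (q := (b + c))); ring.
- apply: (by2 h2 (q := (2%:R * b + 2%:R * c))); ring.
- apply: (by2 h2 (q := (b + c))); ring.
- apply: (by2 h2 (q := (3%:R * b + 2%:R * c))); ring.
Qed.

Lemma dec_2 (R : comPzRingType) (h2 : (2%:R : R) = 0) (l : 'I_4) (hl : val l = 2%N) (a b c x y z : R) :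
  exists v0 v1 : matsuo R, [/\ eigsp l 0 v0, eigsp l 1 v1 & vec a b c x y z = v0 + v1].
Proof.
exists (vec (- a - c - y) (- a + b - c) (- a + c - y) (- 2%:R * a - c + x - y) (- a - c + y) (- a - y + z)), (vec (2%:R * a + c + y) (a + c) (a + y) (2%:R * a + c + y) (a + c) (a + y)); split.
- apply/(eig0_2 h2 hl); split.
  + apply: (by2 h2 (q := (- y))); ring.
  + apply: (by2 h2 (q := (c - y))); ring.
- by apply/(eig1_2 h2 hl); split; ring.
- by rewrite add_vec; apply: vec_eq6; ring.
Qed.

Lemma uniq_2 (R : comPzRingType) (h2 : (2%:R : R) = 0) (l : 'I_4) (hl : val l = 2%N) (a b c x y z : R) :
  eigsp l 0 (vec a b c x y z) -> eigsp l 1 (vec a b c x y z) -> vec a b c x y z = 0.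
Proof.
move=> /(eig0_2 h2 hl) [H0 H1] /(eig1_2 h2 hl) [H2 H3 H4 H5]; rewrite zero_vec; apply: vec_eq6.
- apply: (addh H1); apply: (addh H3); apply: (addh H5); apply: (by2 h2 (q := (b))); ring.
- apply: (addh H0); apply: (addh H1); apply: (addh H5); apply: (by2 h2 (q := (- a + b + y))); ring.
- apply: (addh H0); apply: (addh H3); apply: (addh H5); apply: (by2 h2 (q := (- a + b + c))); ring.
- apply: (addh H1); apply: (addh H2); apply: (addh H3); apply: (addh H5); apply: (by2 h2 (q := (b))); ring.
- apply: (addh H0); apply: (addh H1); apply: (addh H3); apply: (addh H5); apply: (by2 h2 (q := (- a + b + y))); ring.
- apply: (addh H0); apply: (addh H3); apply: (addh H4); apply: (addh H5); apply: (by2 h2 (q := (- a + b + c))); ring.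
Qed.

Lemma fus00_2 (R : comPzRingType) (h2 : (2%:R : R) = 0) (l : 'I_4) (hl : val l = 2%N) (a b c x y z a' b' c' x' y' z' : R) :
  eigsp l 0 (vec a b c x y z) -> eigsp l 0 (vec a' b' c' x' y' z') -> eigsp l 0 (mmul (vec a b c x y z) (vec a' b' c' x' y' z')).
Proof.
move=> /(eig0_2 h2 hl) [-> ->] /(eig0_2 h2 hl) [-> ->]; rewrite mmul_vec.
apply/(eig0_2 h2 hl); split.
- apply: (by2 h2 (q := (b * y' + b' * y - x * y' - x' * y))); ring.
- apply: (by2 h2 (q := (b * y' + b' * y - y * z' - y' * z))); ring.
Qed.

Lemma fus01_2 (R : comPzRingType) (h2 : (2%:R : R) = 0) (l : 'I_4) (hl : val l = 2%N) (a b c x y z a' b' c' x' y' z' : R) :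
  eigsp l 0 (vec a b c x y z) -> eigsp l 1 (vec a' b' c' x' y' z') -> eigsp l 1 (mmul (vec a b c x y z) (vec a' b' c' x' y' z')).
Proof.
move=> /(eig0_2 h2 hl) [-> ->] /(eig1_2 h2 hl) [-> -> -> ->]; rewrite mmul_vec.
apply/(eig1_2 h2 hl); split.
- apply: (by2 h2 (q := (b' * x - b' * y + c' * x - c' * y))); ring.
- apply: (by2 h2 (q := (- b * b' - 2%:R * b * c' + b' * y + 2%:R * c' * y))); ring.
- apply: (by2 h2 (q := (- 2%:R * b' * y + 2%:R * b' * z - c' * y + c' * z))); ring.
- apply: (by2 h2 (q := (- b * b' - 2%:R * b * c' - b' * x - 2%:R * b' * y - c' * x - c' * y))); ring.
Qed.

Lemma fus10_2 (R : comPzRingType) (h2 : (2%:R : R) = 0) (l : 'I_4) (hl : val l = 2%N) (a b c x y z a' b' c' x' y' z' : R) :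
  eigsp l 1 (vec a b c x y z) -> eigsp l 0 (vec a' b' c' x' y' z') -> eigsp l 1 (mmul (vec a b c x y z) (vec a' b' c' x' y' z')).
Proof.
move=> /(eig1_2 h2 hl) [-> -> -> ->] /(eig0_2 h2 hl) [-> ->]; rewrite mmul_vec.
apply/(eig1_2 h2 hl); split.
- apply: (by2 h2 (q := (b * x' - b * y' + c * x' - c * y'))); ring.
- apply: (by2 h2 (q := (- b * b' + b * y' - 2%:R * b' * c + 2%:R * c * y'))); ring.
- apply: (by2 h2 (q := (- 2%:R * b * y' + 2%:R * b * z' - c * y' + c * z'))); ring.
- apply: (by2 h2 (q := (- b * b' - b * x' - 2%:R * b * y' - 2%:R * b' * c - c * x' - c * y'))); ring.
Qed.

Lemma fus11_2 (R : comPzRingType) (h2 : (2%:R : R) = 0) (l : 'I_4) (hl : val l = 2%N) (a b c x y z a' b' c' x' y' z' : R) :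
  eigsp l 1 (vec a b c x y z) -> eigsp l 1 (vec a' b' c' x' y' z') -> mmul (vec a b c x y z) (vec a' b' c' x' y' z') = 0.
Proof.
move=> /(eig1_2 h2 hl) [-> -> -> ->] /(eig1_2 h2 hl) [-> -> -> ->]; rewrite mmul_vec.
rewrite zero_vec; apply: vec_eq6.
- apply: (by2 h2 (q := (2%:R * b * b' + 3%:R * b * c' + 3%:R * b' * c + 2%:R * c * c'))); ring.
- apply: (by2 h2 (q := (2%:R * b * b' + 3%:R * b * c' + 3%:R * b' * c + 2%:R * c * c'))); ring.
- apply: (by2 h2 (q := (2%:R * b * b' + 3%:R * b * c' + 3%:R * b' * c + 2%:R * c * c'))); ring.
- apply: (by2 h2 (q := (2%:R * b * b' + 3%:R * b * c' + 3%:R * b' * c + 2%:R * c * c'))); ring.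
- apply: (by2 h2 (q := (2%:R * b * b' + 3%:R * b * c' + 3%:R * b' * c + 2%:R * c * c'))); ring.
- apply: (by2 h2 (q := (2%:R * b * b' + 3%:R * b * c' + 3%:R * b' * c + 2%:R * c * c'))); ring.
Qed.

Lemma props_2 (R : comPzRingType) (h2 : (2%:R : R) = 0) (l : 'I_4) (hl : val l = 2%N) :
     (forall v : matsuo R, exists v0 v1 : matsuo R,
        [/\ eigsp l 0 v0, eigsp l 1 v1 & v = v0 + v1]) /\
     (forall v : matsuo R, eigsp l 0 v -> eigsp l 1 v -> v = 0) /\
     (forall u v : matsuo R, eigsp l 0 u -> eigsp l 0 v -> eigsp l 0 (mmul u v)) /\
     (forall u v : matsuo R, eigsp l 0 u -> eigsp l 1 v -> eigsp l 1 (mmul u v)) /\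
     (forall u v : matsuo R, eigsp l 1 u -> eigsp l 0 v -> eigsp l 1 (mmul u v)) /\
     (forall u v : matsuo R, eigsp l 1 u -> eigsp l 1 v -> mmul u v = 0).
Proof.
split; first by move=> v; rewrite (vecE v); apply: (dec_2 h2 hl).
split; first by move=> v; rewrite (vecE v); apply: (uniq_2 h2 hl).
split; first by move=> u v; rewrite (vecE u) (vecE v); apply: (fus00_2 h2 hl).
split; first by move=> u v; rewrite (vecE u) (vecE v); apply: (fus01_2 h2 hl).
split; first by move=> u v; rewrite (vecE u) (vecE v); apply: (fus10_2 h2 hl).
by move=> u v; rewrite (vecE u) (vecE v); apply: (fus11_2 h2 hl).
Qed.

Lemma line_vec3 (R : comPzRingType) (l : 'I_4) (hl : val l = 3%N) : line_elt R l = vec 0 0 1 1 1 0.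
Proof.
rewrite /line_elt /cq_line hl; apply/ffunP => r.
rewrite sum_ffunE big_mkcond !big_ord_recl big_ord0 !in_set3 !ffunE.
by case: r => [[|[|[|[|[|[|?]]]]]] Hr] //=; rewrite ?mulr0n ?mulr1n ?addr0 ?add0r.
Qed.

Lemma eig0_3 (R : comPzRingType) (h2 : (2%:R : R) = 0) (l : 'I_4) (hl : val l = 3%N) (a b c x y z : R) :
  eigsp l 0 (vec a b c x y z) <-> a = z /\ b = z.
Proof.
rewrite /eigsp (line_vec3 R hl) mmul_vec scale_vec; split.
  move/vec_inj => [H0 H1 H2 H3 [H4 H5]]; split.
  - apply: (addh H1); apply: (by2 h2 (q := (- b - z))); ring.
  - apply: (addh H0); apply: (by2 h2 (q := (- a - z))); ring.
case=> -> ->; apply: vec_eq6.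
- apply: (by2 h2 (q := (2%:R * z))); ring.
- apply: (by2 h2 (q := (2%:R * z))); ring.
- apply: (by2 h2 (q := (c + x + y + z))); ring.
- apply: (by2 h2 (q := (c + x + y + z))); ring.
- apply: (by2 h2 (q := (c + x + y + z))); ring.
- apply: (by2 h2 (q := (2%:R * z))); ring.
Qed.

Lemma eig1_3 (R : comPzRingType) (h2 : (2%:R : R) = 0) (l : 'I_4) (hl : val l = 3%N) (a b c x y z : R) :
  eigsp l 1 (vec a b c x y z) <-> [/\ x = a, y = b, z = c & a = b + c].
Proof.
rewrite /eigsp (line_vec3 R hl) mmul_vec scale_vec; split.
  move/vec_inj => [H0 H1 H2 H3 [H4 H5]]; split.
  - apply: (addh H0); apply: (addh H3); apply: (by2 h2 (q := (- a - b - c - y - z))); ring.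
  - apply: (addh H0); apply: (addh H4); apply: (by2 h2 (q := (- a - b - c - x - z))); ring.
  - apply: (addh H0); apply: (addh H2); apply: (by2 h2 (q := (- a - b - c - x - y))); ring.
  - apply: (addh H2); apply: (by2 h2 (q := (- b - c - x - y))); ring.
case=> -> -> -> ->; apply: vec_eq6.
- apply: (by2 h2 (q := (b + c))); ring.
- apply: (by2 h2 (q := (b + c))); ring.
- apply: (by2 h2 (q := (3%:R * b + 2%:R * c))); ring.
- apply: (by2 h2 (q := (2%:R * b + 2%:R * c))); ring.
- apply: (by2 h2 (q := (2%:R * b + 3%:R * c))); ring.
- apply: (by2 h2 (q := (b + c))); ring.
Qed.

Lemma dec_3 (R : comPzRingType) (h2 : (2%:R : R) = 0) (l : 'I_4) (hl : val l = 3%N) (a b c x y z : R) :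
  exists v0 v1 : matsuo R, [/\ eigsp l 0 v0, eigsp l 1 v1 & vec a b c x y z = v0 + v1].
Proof.
exists (vec (- a - b - z) (- a + b - z) (- a - b + c) (- 2%:R * a - b + x - z) (- a + y - z) (- a - b + z)), (vec (2%:R * a + b + z) (a + z) (a + b) (2%:R * a + b + z) (a + z) (a + b)); split.
- apply/(eig0_3 h2 hl); split.
  + apply: (by2 h2 (q := (- z))); ring.
  + apply: (by2 h2 (q := (b - z))); ring.
- by apply/(eig1_3 h2 hl); split; ring.
- by rewrite add_vec; apply: vec_eq6; ring.
Qed.

Lemma uniq_3 (R : comPzRingType) (h2 : (2%:R : R) = 0) (l : 'I_4) (hl : val l = 3%N) (a b c x y z : R) :
  eigsp l 0 (vec a b c x y z) -> eigsp l 1 (vec a b c x y z) -> vec a b c x y z = 0.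
Proof.
move=> /(eig0_3 h2 hl) [H0 H1] /(eig1_3 h2 hl) [H2 H3 H4 H5]; rewrite zero_vec; apply: vec_eq6.
- apply: (addh H1); apply: (addh H4); apply: (addh H5); apply: (by2 h2 (q := (c))); ring.
- apply: (addh H0); apply: (addh H4); apply: (addh H5); apply: (by2 h2 (q := (- a + b + c))); ring.
- apply: (addh H0); apply: (addh H1); apply: (addh H5); apply: (by2 h2 (q := (- a + c + z))); ring.
- apply: (addh H1); apply: (addh H2); apply: (addh H4); apply: (addh H5); apply: (by2 h2 (q := (c))); ring.
- apply: (addh H0); apply: (addh H3); apply: (addh H4); apply: (addh H5); apply: (by2 h2 (q := (- a + b + c))); ring.
- apply: (addh H0); apply: (addh H1); apply: (addh H4); apply: (addh H5); apply: (by2 h2 (q := (- a + c + z))); ring.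
Qed.

Lemma fus00_3 (R : comPzRingType) (h2 : (2%:R : R) = 0) (l : 'I_4) (hl : val l = 3%N) (a b c x y z a' b' c' x' y' z' : R) :
  eigsp l 0 (vec a b c x y z) -> eigsp l 0 (vec a' b' c' x' y' z') -> eigsp l 0 (mmul (vec a b c x y z) (vec a' b' c' x' y' z')).
Proof.
move=> /(eig0_3 h2 hl) [-> ->] /(eig0_3 h2 hl) [-> ->]; rewrite mmul_vec.
apply/(eig0_3 h2 hl); split.
- apply: (by2 h2 (q := (c * z' + c' * z - x * z' - x' * z))); ring.
- apply: (by2 h2 (q := (c * z' + c' * z - y * z' - y' * z))); ring.
Qed.

Lemma fus01_3 (R : comPzRingType) (h2 : (2%:R : R) = 0) (l : 'I_4) (hl : val l = 3%N) (a b c x y z a' b' c' x' y' z' : R) :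
  eigsp l 0 (vec a b c x y z) -> eigsp l 1 (vec a' b' c' x' y' z') -> eigsp l 1 (mmul (vec a b c x y z) (vec a' b' c' x' y' z')).
Proof.
move=> /(eig0_3 h2 hl) [-> ->] /(eig1_3 h2 hl) [-> -> -> ->]; rewrite mmul_vec.
apply/(eig1_3 h2 hl); split.
- apply: (by2 h2 (q := (b' * x - b' * z + c' * x - c' * z))); ring.
- apply: (by2 h2 (q := (b' * y - b' * z + 2%:R * c' * y - 2%:R * c' * z))); ring.
- apply: (by2 h2 (q := (- 2%:R * b' * c + 2%:R * b' * z - c * c' + c' * z))); ring.
- apply: (by2 h2 (q := (- 2%:R * b' * c - b' * x - b' * z - c * c' - c' * x - 2%:R * c' * z))); ring.
Qed.

Lemma fus10_3 (R : comPzRingType) (h2 : (2%:R : R) = 0) (l : 'I_4) (hl : val l = 3%N) (a b c x y z a' b' c' x' y' z' : R) :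
  eigsp l 1 (vec a b c x y z) -> eigsp l 0 (vec a' b' c' x' y' z') -> eigsp l 1 (mmul (vec a b c x y z) (vec a' b' c' x' y' z')).
Proof.
move=> /(eig1_3 h2 hl) [-> -> -> ->] /(eig0_3 h2 hl) [-> ->]; rewrite mmul_vec.
apply/(eig1_3 h2 hl); split.
- apply: (by2 h2 (q := (b * x' - b * z' + c * x' - c * z'))); ring.
- apply: (by2 h2 (q := (b * y' - b * z' + 2%:R * c * y' - 2%:R * c * z'))); ring.
- apply: (by2 h2 (q := (- 2%:R * b * c' + 2%:R * b * z' - c * c' + c * z'))); ring.
- apply: (by2 h2 (q := (- 2%:R * b * c' - b * x' - b * z' - c * c' - c * x' - 2%:R * c * z'))); ring.
Qed.

Lemma fus11_3 (R : comPzRingType) (h2 : (2%:R : R) = 0) (l : 'I_4) (hl : val l = 3%N) (a b c x y z a' b' c' x' y' z' : R) :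
  eigsp l 1 (vec a b c x y z) -> eigsp l 1 (vec a' b' c' x' y' z') -> mmul (vec a b c x y z) (vec a' b' c' x' y' z') = 0.
Proof.
move=> /(eig1_3 h2 hl) [-> -> -> ->] /(eig1_3 h2 hl) [-> -> -> ->]; rewrite mmul_vec.
rewrite zero_vec; apply: vec_eq6.
- apply: (by2 h2 (q := (2%:R * b * b' + 3%:R * b * c' + 3%:R * b' * c + 2%:R * c * c'))); ring.
- apply: (by2 h2 (q := (2%:R * b * b' + 3%:R * b * c' + 3%:R * b' * c + 2%:R * c * c'))); ring.
- apply: (by2 h2 (q := (2%:R * b * b' + 3%:R * b * c' + 3%:R * b' * c + 2%:R * c * c'))); ring.
- apply: (by2 h2 (q := (2%:R * b * b' + 3%:R * b * c' + 3%:R * b' * c + 2%:R * c * c'))); ring.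
- apply: (by2 h2 (q := (2%:R * b * b' + 3%:R * b * c' + 3%:R * b' * c + 2%:R * c * c'))); ring.
- apply: (by2 h2 (q := (2%:R * b * b' + 3%:R * b * c' + 3%:R * b' * c + 2%:R * c * c'))); ring.
Qed.

Lemma props_3 (R : comPzRingType) (h2 : (2%:R : R) = 0) (l : 'I_4) (hl : val l = 3%N) :
     (forall v : matsuo R, exists v0 v1 : matsuo R,
        [/\ eigsp l 0 v0, eigsp l 1 v1 & v = v0 + v1]) /\
     (forall v : matsuo R, eigsp l 0 v -> eigsp l 1 v -> v = 0) /\
     (forall u v : matsuo R, eigsp l 0 u -> eigsp l 0 v -> eigsp l 0 (mmul u v)) /\
     (forall u v : matsuo R, eigsp l 0 u -> eigsp l 1 v -> eigsp l 1 (mmul u v)) /\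
     (forall u v : matsuo R, eigsp l 1 u -> eigsp l 0 v -> eigsp l 1 (mmul u v)) /\
     (forall u v : matsuo R, eigsp l 1 u -> eigsp l 1 v -> mmul u v = 0).
Proof.
split; first by move=> v; rewrite (vecE v); apply: (dec_3 h2 hl).
split; first by move=> v; rewrite (vecE v); apply: (uniq_3 h2 hl).
split; first by move=> u v; rewrite (vecE u) (vecE v); apply: (fus00_3 h2 hl).
split; first by move=> u v; rewrite (vecE u) (vecE v); apply: (fus01_3 h2 hl).
split; first by move=> u v; rewrite (vecE u) (vecE v); apply: (fus10_3 h2 hl).
by move=> u v; rewrite (vecE u) (vecE v); apply: (fus11_3 h2 hl).
Qed.

Lemma eig1_any (R : comPzRingType) (h2 : (2%:R : R) = 0) (l : 'I_4) (a b c x y z : R) :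
  eigsp l 1 (vec a b c x y z) <-> [/\ x = a, y = b, z = c & a = b + c].
Proof.
case: l => [[|[|[|[|m]]]] Hm].
- exact: (@eig1_0 R h2 (Ordinal Hm) erefl).
- exact: (@eig1_1 R h2 (Ordinal Hm) erefl).
- exact: (@eig1_2 R h2 (Ordinal Hm) erefl).
- exact: (@eig1_3 R h2 (Ordinal Hm) erefl).
- by [].
Qed.

Theorem theorem5p14 (R : comPzRingType) (h2 : (2%:R : R) = 0) :
  (forall l : 'I_4,
     (* A = A_0 (+) A_1 *)
     (forall v : matsuo R, exists v0 v1 : matsuo R,
        [/\ eigsp l 0 v0, eigsp l 1 v1 & v = v0 + v1]) /\
     (forall v : matsuo R, eigsp l 0 v -> eigsp l 1 v -> v = 0) /\
     (* fusion law *)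
     (forall u v : matsuo R, eigsp l 0 u -> eigsp l 0 v -> eigsp l 0 (mmul u v)) /\
     (forall u v : matsuo R, eigsp l 0 u -> eigsp l 1 v -> eigsp l 1 (mmul u v)) /\
     (forall u v : matsuo R, eigsp l 1 u -> eigsp l 0 v -> eigsp l 1 (mmul u v)) /\
     (forall u v : matsuo R, eigsp l 1 u -> eigsp l 1 v -> mmul u v = 0)) /\
  (* the 1-eigenspaces coincide *)
  (forall (l l' : 'I_4) (v : matsuo R), eigsp l 1 v <-> eigsp l' 1 v).
Proof.
split.
  case=> [[|[|[|[|m]]]] Hm].
  - exact: (@props_0 R h2 (Ordinal Hm) erefl).
  - exact: (@props_1 R h2 (Ordinal Hm) erefl).
  - exact: (@props_2 R h2 (Ordinal Hm) erefl).
  - exact: (@props_3 R h2 (Ordinal Hm) erefl).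
  - by [].
move=> l l' v; rewrite (vecE v).
by split => /(eig1_any h2) H; apply/(eig1_any h2).
Qed.
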